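(* Let $n$ be a positive integer and let $\mathbb{F}$ be a field with $\operatorname{char}(\mathbb{F})\neq 2$ and $|\mathbb{F}|\geq n^2+1$. Let $\Sigma_n$ denote the set of all $n\times n$ symmetric matrices over $\mathbb{F}$. If $a,b\in\Sigma_n$ satisfy $\det(a+x)=\det(b+x)$ for all $x\in\Sigma_n$, then $a=b$. *)

(* Defs.v *)
From mathcomp Require Import all_boot all_algebra.
Set Implicit Arguments. Unset Strict Implicit. Unset Printing Implicit Defensive.
Import GRing.Theory.
Local Open Scope ring_scope.

Definition sym_mx (F : fieldType) (n : nat) (A : 'M[F]_n) : Prop := A^T = A.

(* |F| >= m, allowing F infinite: F contains m pairwise distinct elements. *)
Definition card_ge (F : fieldType) (m : nat) : Prop :=
  exists s : seq F, uniq s /\ size s = m.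

(* Main.v *)
Require Import Defs.
From mathcomp Require Import all_boot all_algebra.
From mathcomp Require Import ring.
From mathcomp Require Import fingroup perm.
Import GRing.Theory.
Local Open Scope ring_scope.

Lemma tr_delta (F : fieldType) n (i j : 'I_n) (A : 'M[F]_n) :
  \tr (delta_mx i j *m A) = A j i.
Proof.
rewrite /mxtrace (bigD1 i) //= big1 => [|k nk]; last first.
  by rewrite mxE big1 // => l _; rewrite mxE (negbTE nk) mul0r.
rewrite addr0 mxE (bigD1 j) //= big1 => [|l nl]; last first.
  by rewrite mxE (negbTE nl) andbF mul0r.
by rewrite mxE !eqxx mul1r addr0.
Qed.

Lemma tr_perm (F : fieldType) n (s : 'S_n) (A : 'M[F]_n) :
  \tr (perm_mx s *m A) = \sum_k A (s k) k.
Proof.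
by rewrite -row_permE /mxtrace; apply: eq_bigr => k _; rewrite mxE.
Qed.
Lemma L1 (F : fieldType) (n : nat) (hn : (0 < n)%N) (s : seq F)
  (us : uniq s) (hs : (n <= size s)%N) (M : 'M[F]_n)
  (h : forall t : F, \det (t%:M + M) = t ^+ n) : \tr M = 0.
Proof.
set p := char_poly (- M).
have ev t : p.[t] = t ^+ n.
  rewrite -h /p /char_poly -horner_evalE -det_map_mx; congr (\det _).
  by apply/matrixP => i j; rewrite !mxE /= horner_evalE hornerD hornerN hornerMn hornerX hornerC opprK.
have hq : p - 'X^n = 0.
  apply/eqP; apply: contraT => nz.
  have := max_poly_roots nz _ us.
  have -> : all (root (p - 'X^n)) s.
    by apply/allP => t _; rewrite /root hornerD hornerN ev hornerXn subrr.
  move=> /(_ isT) lt.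
  have : (size (p - 'X^n)%R <= n)%N.
    apply/leq_sizeP => k hk; rewrite coefB coefXn.
    move: hk; rewrite leq_eqVlt => /orP [/eqP <-|hk].
      have := char_poly_monic (- M); rewrite monicE /lead_coef size_char_poly /=.
      by move=> /eqP ->; rewrite eqxx subrr.
    rewrite gtn_eqF //; have := size_char_poly (- M).
    by move=> hsz; rewrite nth_default ?subrr // hsz.
  move=> hle; have := leq_trans lt hle; rewrite ltnNge hs //.
have := char_poly_trace (- M) hn; rewrite -/p.
have -> : p = 'X^n by apply/eqP; rewrite -subr_eq0 hq.
rewrite coefXn; have -> : (n.-1 == n) = false by clear -hn; case: n hn => // k _; rewrite ltn_eqF.
by rewrite (raddfN (@mxtrace F n)) opprK => <-.
Qed.

Lemma tr_sdelta (F : fieldType) n (c : F) (i j : 'I_n) (A : 'M[F]_n) :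
  \tr ((c *: delta_mx i j) *m A) = c * A j i.
Proof. by rewrite -scalemxAl mxtraceZ tr_delta. Qed.

Lemma trB (F : fieldType) n (A B : 'M[F]_n) : \tr (A - B) = \tr A - \tr B.
Proof. by rewrite mxtraceD (raddfN (@mxtrace F n)). Qed.

Theorem lemma2p1 (F : fieldType) (n : nat) (hn : (0 < n)%N)
  (hchar : (2 \notin [pchar F])%N)
  (hcard : card_ge F (n ^ 2 + 1)%N)
  (a b : 'M[F]_n) (ha : sym_mx a) (hb : sym_mx b)
  (hdet : forall x : 'M[F]_n, sym_mx x -> \det (a + x) = \det (b + x)) :
  a = b.
Proof.
case: hcard => s [us hs].
have hns : (n <= size s)%N.
  rewrite hs; apply: leq_trans (leq_addr _ _); rewrite expnS expn1.
  by rewrite leq_pmulr.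
have h2 : (2%:R : F) != 0.
  by move: hchar; rewrite inE /=.
set d := b - a.
have dsym : d^T = d by rewrite /d linearB /= ha hb.
have key y : sym_mx y -> \det (y + d) = \det y.
  move=> hy; have := hdet (y - a).
  rewrite /sym_mx linearB /= hy ha => /(_ erefl).
  by rewrite (addrC a) subrK addrCA => ->.
have tr0 y : sym_mx y -> y *m y = 1%:M -> \tr (y *m d) = 0.
  move=> hy yy; apply: (@L1 F n hn s us hns) => t.
  have dy : \det y * \det y = 1 by rewrite -det_mulmx yy det1.
  have dy0 : \det y != 0 by apply/eqP => e; move: dy; rewrite e mul0r => /eqP; rewrite eq_sym oner_eq0.
  apply: (mulfI dy0); rewrite -det_mulmx mulmxDr mul_mx_scalar mulmxA yy mul1mx.
  rewrite key; last by rewrite /sym_mx linearZ /= hy.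
  by rewrite detZ mulrC.
have trd : \tr d = 0.
  by have := tr0 1%:M (tr_scalar_mx _ _) (mulmx1 _); rewrite mul1mx.
have diag i : d i i = 0.
  pose Y : 'M[F]_n := 1%:M - 2%:R *: delta_mx i i.
  have sy : sym_mx Y by rewrite /sym_mx /Y linearB /= tr_scalar_mx linearZ /= trmx_delta.
  have yy : Y *m Y = 1%:M.
    rewrite /Y mulmxBl mul1mx mulmxBr mulmx1 -!scalemxAl -!scalemxAr mul_delta_mx scalerA.
    rewrite -scalerBl -addrA -opprD -scalerDl.
    have -> : (2%:R + (2%:R - 2%:R * 2%:R) : F) = 0 by ring.
    by rewrite scale0r subr0.
  have := tr0 _ sy yy; rewrite /Y mulmxBl mul1mx trB tr_sdelta trd add0r.
  by move/eqP; rewrite oppr_eq0 mulf_eq0 (negbTE h2) => /eqP.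
have offd i j : i != j -> d i j = 0.
  move=> nij; pose Y : 'M[F]_n := perm_mx (tperm i j).
  have sy : sym_mx Y by rewrite /sym_mx /Y tr_perm_mx tpermV.
  have yy : Y *m Y = 1%:M by rewrite /Y -perm_mxM tperm2 perm_mx1.
  have := tr0 _ sy yy; rewrite /Y tr_perm (bigD1 i) //= (bigD1 j) 1?eq_sym //= big1; last first.
    by move=> k /andP [ki kj]; rewrite tpermD 1?eq_sym // diag.
  rewrite tpermL tpermR addr0.
  have -> : d j i = d i j by rewrite -[in LHS]dsym mxE.
  by move/eqP; rewrite -mulr2n -mulr_natl mulf_eq0 (negbTE h2) => /eqP.
apply/matrixP => i j; apply/eqP; rewrite -subr_eq0 -oppr_eq0 opprB.
have -> : b i j - a i j = d i j by rewrite /d !mxE.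
by case: (eqVneq i j) => [->|nij]; rewrite ?diag ?offd.
Qed.
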